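(* Let $\trianglerighteq$ denote one of the relations $\ge,\le,=,>,<$ and $\vartriangleleft$ its negation. Let $F\subseteq\bar L^0(\mathcal G)$ and $Y_0\in\bar L^0(\mathcal G)$, and define $$\mathcal A=\{A\in\mathcal G:\ Y\trianglerighteq Y_0\text{ on }A\ \ \forall Y\in F\},\qquad \mathcal A^\vdash=\{A\in\mathcal G:\ \exists Y\in F\text{ with }Y\vartriangleleft Y_0\text{ on }A\}.$$ Assume that for every sequence of pairwise disjoint sets $A_i\in\mathcal A^\vdash$ and $Y_i\in F$ with $Y_i\vartriangleleft Y_0$ on $A_i$, one has $\sum_{i=1}^\infty Y_i\mathbf 1_{A_i}\in F$. Then there exist $A_M\in\mathcal A$ and $A_M^\vdash\in\mathcal A^\vdash$ with $\mathbb P(A_M\cap A_M^\vdash)=0$ and $\mathbb P(A_M\cup A_M^\vdash)=1$; in particular $Y\trianglerighteq Y_0$ on $A_M$ for all $Y\in F$, and $\overline Y\vartriangleleft Y_0$ on $A_M^\vdash$ for some $\overline Y\in F$.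
   Context: $(\Omega,\mathcal F,\mathbb P)$ is a probability space and $\mathcal G\subseteq\mathcal F$ a sub-$\sigma$-algebra. $\bar L^0(\mathcal G)$ denotes $\mathcal G$-measurable random variables with values in $\mathbb R\cup\{+\infty\}$. ''$Y\trianglerighteq Y_0$ on $A$'' means the relation holds $\mathbb P$-a.s. on $A$. *)

(* Defs.v *)
From Stdlib Require Import Reals.
Open Scope R_scope.

Definition set (T : Type) := T -> Prop.

Record is_sigma_algebra {Omega : Type} (S : set (set Omega)) : Prop := {
  sa_full  : S (fun _ => True);
  sa_compl : forall A, S A -> S (fun w => ~ A w);
  sa_union : forall A : nat -> set Omega,
               (forall n, S (A n)) -> S (fun w => exists n, A n w)
}.

Record ProbSpace := {
  Omega : Type;
  Fsig  : set (set Omega);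
  Prob  : set Omega -> R;
  Fsig_sigma : is_sigma_algebra Fsig;
  Prob_nonneg : forall A, Fsig A -> 0 <= Prob A;
  Prob_full : Prob (fun _ => True) = 1;
  Prob_sigma_additive : forall A : nat -> set Omega,
      (forall n, Fsig (A n)) ->
      (forall m n w, m <> n -> A m w -> A n w -> False) ->
      infinite_sum (fun n => Prob (A n)) (Prob (fun w => exists n, A n w))
}.

Definition sub_sigma_algebra (Ps : ProbSpace) (G : set (set (Omega Ps))) : Prop :=
  is_sigma_algebra G /\ forall A, G A -> Fsig Ps A.

Inductive ereal := Fin (r : R) | PInf.

Definition ele (x y : ereal) : Prop :=
  match x, y with
  | Fin a, Fin b => a <= b
  | _, PInf => True
  | PInf, Fin _ => False
  end.
Definition elt (x y : ereal) : Prop := ele x y /\ x <> y.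

(* \bar L^0(G): G-measurable random variables with values in R \cup {+oo} *)
Definition L0bar {Om : Type} (G : set (set Om)) (Y : Om -> ereal) : Prop :=
  forall r : R, G (fun w => ele (Y w) (Fin r)).

Inductive relation_kind := RGe | RLe | REq | RGt | RLt.

Definition rel_holds (k : relation_kind) (x y : ereal) : Prop :=
  match k with
  | RGe => ele y x
  | RLe => ele x y
  | REq => x = y
  | RGt => elt y x
  | RLt => elt x y
  end.

Definition rel_neg (k : relation_kind) (x y : ereal) : Prop := ~ rel_holds k x y.

(* "Y R Y0 on A": the relation holds P-a.s. on A *)
Definition holds_on (Ps : ProbSpace) (R0 : ereal -> ereal -> Prop)
    (Y Y0 : Omega Ps -> ereal) (A : set (Omega Ps)) : Prop :=
  exists N : set (Omega Ps), Fsig Ps N /\ Prob Ps N = 0 /\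
    forall w, A w -> ~ N w -> R0 (Y w) (Y0 w).

Definition calA (Ps : ProbSpace) (G : set (set (Omega Ps))) (k : relation_kind)
    (F : set (Omega Ps -> ereal)) (Y0 : Omega Ps -> ereal) (A : set (Omega Ps)) : Prop :=
  G A /\ forall Y, F Y -> holds_on Ps (rel_holds k) Y Y0 A.

Definition calAv (Ps : ProbSpace) (G : set (set (Omega Ps))) (k : relation_kind)
    (F : set (Omega Ps -> ereal)) (Y0 : Omega Ps -> ereal) (A : set (Omega Ps)) : Prop :=
  G A /\ exists Y, F Y /\ holds_on Ps (rel_neg k) Y Y0 A.

Definition setI {T} (A B : set T) : set T := fun w => A w /\ B w.
Definition setU {T} (A B : set T) : set T := fun w => A w \/ B w.

(* Main.v *)
Require Import Defs.
From Stdlib Require Import Reals.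
Open Scope R_scope.
From Stdlib Require Import Lra Lia Classical ClassicalEpsilon FunctionalExtensionality PropExtensionality ZArith.

Lemma set_ext {T} (A B : set T) : (forall w, A w <-> B w) -> A = B.
Proof. intros H; apply functional_extensionality; intro w; apply propositional_extensionality; auto. Qed.

Lemma sa_ext {T} (S : set (set T)) (A B : set T) : (forall w, A w <-> B w) -> S A -> S B.
Proof. intros H HA. replace B with A; auto. apply set_ext; auto. Qed.

Lemma sa_c {T} (S : set (set T)) (HS : is_sigma_algebra S) A : S A -> S (fun w => ~ A w).
Proof. apply (sa_compl _ HS). Qed.

Lemma sa_dn {T} (S : set (set T)) (HS : is_sigma_algebra S) A : S (fun w => ~ A w) -> S A.
Proof. intro H. apply (sa_ext S (fun w => ~ ~ A w)).
  intro w; split; [apply NNPP| tauto]. apply sa_c; auto. Qed.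

Lemma sa_empty {T} (S : set (set T)) (HS : is_sigma_algebra S) : S (fun _ => False).
Proof. apply (sa_ext S (fun w => ~ True)). intro; tauto. apply sa_c, (sa_full _ HS); auto. Qed.

Lemma sa_U2 {T} (S : set (set T)) (HS : is_sigma_algebra S) A B :
  S A -> S B -> S (fun w => A w \/ B w).
Proof. intros HA HB.
  apply (sa_ext S (fun w => exists n:nat, (fun n => match n with 0%nat => A | _ => B end) n w)).
  - intro w; split. intros [[|n] Hn]; auto. intros [H|H]; [exists 0%nat|exists 1%nat]; auto.
  - apply (sa_union _ HS). intros [|n]; auto.
Qed.

Lemma sa_I2 {T} (S : set (set T)) (HS : is_sigma_algebra S) A B :
  S A -> S B -> S (fun w => A w /\ B w).
Proof. intros HA HB. apply sa_dn; auto.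
  apply (sa_ext S (fun w => ~ A w \/ ~ B w)).
  - intro w; split. tauto. intro H. destruct (classic (A w)); [right|left]; tauto.
  - apply sa_U2; auto; apply sa_c; auto.
Qed.

Lemma sa_unionZ {T} (S : set (set T)) (HS : is_sigma_algebra S) (A : Z -> set T) :
  (forall z, S (A z)) -> S (fun w => exists z, A z w).
Proof.
  intro H.
  apply (sa_ext S (fun w => exists n:nat, (fun m w => A (Z.of_nat m) w \/ A (- Z.of_nat m)%Z w) n w)).
  - intro w; split.
    + intros [n [H1|H1]]; eauto.
    + intros [z Hz]. exists (Z.to_nat (Z.abs z)). destruct (Z_le_gt_dec 0 z).
      * left. replace (Z.of_nat (Z.to_nat (Z.abs z))) with z by lia. auto.
      * right. replace (- Z.of_nat (Z.to_nat (Z.abs z)))%Z with z by lia. auto.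
  - apply (sa_union _ HS). intro n. apply sa_U2; auto.
Qed.

Lemma ele_trans x y z : ele x y -> ele y z -> ele x z.
Proof. destruct x, y, z; simpl; intros; try lra; auto; contradiction. Qed.
Lemma ele_refl x : ele x x.
Proof. destruct x; simpl; auto; lra. Qed.
Lemma ele_antisym x y : ele x y -> ele y x -> x = y.
Proof. destruct x,y; simpl; intros; try contradiction; auto. f_equal; lra. Qed.

Definition qq (n:nat) (z:Z) : R := IZR z / INR (S n).

Lemma not_ele_char x y : ~ ele x y <-> exists n z, ele y (Fin (qq n z)) /\ ~ ele x (Fin (qq n z)).
Proof.
  split.
  - destruct x as [a|], y as [b|]; simpl; intro H.
    + assert (Hab : b < a) by lra.
      destruct (archimed_cor1 (a - b)) as [N [HN1 HN2]]; [lra|].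
      destruct (archimed (b * INR N)) as [H1 H2].
      exists (N - 1)%nat, (up (b * INR N)). unfold qq.
      replace (S (N-1)) with N by lia.
      assert (HNp : 0 < INR N) by (apply lt_0_INR; lia).
      set (iN := / INR N) in *.
      assert (HiN : INR N * iN = 1) by (unfold iN; field; lra).
      assert (Hip : 0 < iN) by (unfold iN; apply Rinv_0_lt_compat; lra).
      unfold Rdiv. fold iN.
      set (zz := IZR (up (b * INR N))) in *.
      assert (E1 : zz * iN - b = (zz - b * INR N) * iN) by (rewrite Rmult_minus_distr_r; rewrite Rmult_assoc, HiN; ring).
      assert (0 < (zz - b * INR N) * iN) by (apply Rmult_lt_0_compat; lra).
      assert ((zz - b * INR N) * iN <= 1 * iN) by (apply Rmult_le_compat_r; lra).
      split; lra.
    + contradiction.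
    + exists 0%nat, (up b). unfold qq. simpl INR.
      destruct (archimed b). split; [|tauto].
      replace (IZR (up b) / 1) with (IZR (up b)) by field. lra.
    + exfalso; apply H; auto.
  - intros [n [z [H1 H2]]] H. apply H2. eapply ele_trans; eauto.
Qed.

Lemma meas_nle {T} (G : set (set T)) (HG : is_sigma_algebra G) (Y1 Y2 : T -> ereal) :
  L0bar G Y1 -> L0bar G Y2 -> G (fun w => ~ ele (Y1 w) (Y2 w)).
Proof.
  intros H1 H2.
  apply (sa_ext G (fun w => exists n:nat, (fun n w => exists z, (fun z w => ele (Y2 w) (Fin (qq n z)) /\ ~ ele (Y1 w) (Fin (qq n z))) z w) n w)).
  - intro w. rewrite not_ele_char. simpl. tauto.
  - apply (sa_union _ HG); intro n. apply sa_unionZ; auto. intro z. apply sa_I2; auto. apply sa_c; auto.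
Qed.

Lemma meas_neq {T} (G : set (set T)) (HG : is_sigma_algebra G) (Y1 Y2 : T -> ereal) :
  L0bar G Y1 -> L0bar G Y2 -> G (fun w => Y1 w <> Y2 w).
Proof.
  intros H1 H2.
  apply (sa_ext G (fun w => ~ele (Y1 w)(Y2 w) \/ ~ ele (Y2 w)(Y1 w))).
  - intro w; split.
    + intros [H|H] E; apply H; rewrite E; apply ele_refl.
    + intros H. destruct (classic (ele (Y1 w)(Y2 w))), (classic (ele (Y2 w)(Y1 w))); auto.
      exfalso; apply H, ele_antisym; auto.
  - apply sa_U2; auto; apply meas_nle; auto.
Qed.

Lemma meas_ele {T} (G : set (set T)) (HG : is_sigma_algebra G) (Y1 Y2 : T -> ereal) :
  L0bar G Y1 -> L0bar G Y2 -> G (fun w => ele (Y1 w) (Y2 w)).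
Proof. intros; apply sa_dn; auto; apply meas_nle; auto. Qed.

Lemma meas_relneg {T} (G : set (set T)) (HG : is_sigma_algebra G) k (Y Y0 : T -> ereal) :
  L0bar G Y -> L0bar G Y0 -> G (fun w => rel_neg k (Y w) (Y0 w)).
Proof.
  intros H H0. destruct k; unfold rel_neg, rel_holds, elt.
  - exact (meas_nle G HG Y0 Y H0 H).
  - exact (meas_nle G HG Y Y0 H H0).
  - exact (meas_neq G HG Y Y0 H H0).
  - apply (sa_c G HG (fun w => ele (Y0 w) (Y w) /\ Y0 w <> Y w)).
    apply sa_I2; auto; [apply meas_ele|apply meas_neq]; auto.
  - apply (sa_c G HG (fun w => ele (Y w) (Y0 w) /\ Y w <> Y0 w)).
    apply sa_I2; auto; [apply meas_ele|apply meas_neq]; auto.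
Qed.

Lemma P_empty Ps : Prob Ps (fun _ => False) = 0.
Proof.
  pose proof (Prob_sigma_additive Ps (fun _ _ => False)) as H.
  cbv beta in H.
  assert (E: (fun w : Omega Ps => exists _ : nat, False) = (fun _ => False))
    by (apply set_ext; intro; split; [intros [_ []]|tauto]).
  rewrite E in H.
  specialize (H (fun _ => sa_empty _ (Fsig_sigma Ps)) (fun m n w _ f _ => f)).
  set (c := Prob Ps (fun _ => False)) in *.
  destruct (Req_dec c 0); auto. exfalso.
  destruct (H (Rabs c / 2)) as [N HN]. { apply Rabs_pos_lt in H0. lra. }
  pose proof (HN N (le_n N)) as H1. pose proof (HN (S N) (le_S _ _ (le_n N))) as H2.
  unfold R_dist in *. rewrite tech5 in H2.
  revert H1 H2. set (s := sum_f_R0 (fun _ => c) N).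
  unfold Rabs; repeat destruct Rcase_abs; intros; lra.
Qed.

Lemma P_add Ps A B : Fsig Ps A -> Fsig Ps B -> (forall w, A w -> B w -> False) ->
  Prob Ps (fun w => A w \/ B w) = Prob Ps A + Prob Ps B.
Proof.
  intros HA HB HD.
  set (f := fun n:nat => match n with 0%nat => A | 1%nat => B | _ => fun _ : Omega Ps => False end).
  pose proof (Prob_sigma_additive Ps f) as H.
  assert (E : (fun w => exists n, f n w) = (fun w => A w \/ B w)).
  { apply set_ext; intro w; split.
    intros [[|[|n]] Hn]; simpl in Hn; tauto.
    intros [H1|H1]; [exists 0%nat|exists 1%nat]; exact H1. }
  rewrite E in H.
  assert (H' : infinite_sum (fun n => Prob Ps (f n)) (Prob Ps (fun w => A w \/ B w))).
  { apply H.
    - intros [|[|n]]; simpl; auto. apply sa_empty, Fsig_sigma.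
    - intros [|[|m]] [|[|n]] w Hmn H1 H2; simpl in *; try contradiction; try lia; eauto. }
  apply (uniqueness_sum _ _ _ H').
  assert (Hs : forall n, sum_f_R0 (fun n => Prob Ps (f n)) (S n) = Prob Ps A + Prob Ps B).
  { induction n. reflexivity. rewrite tech5, IHn.
    change (Prob Ps (f (S (S n)))) with (Prob Ps (fun _ => False)). rewrite P_empty. ring. }
  intros eps Heps. exists 1%nat. intros n Hn. destruct n; [lia|].
  rewrite Hs. unfold R_dist. replace (_ - _) with 0 by ring. rewrite Rabs_R0; lra.
Qed.

Lemma P_mono Ps A B : Fsig Ps A -> Fsig Ps B -> (forall w, A w -> B w) -> Prob Ps A <= Prob Ps B.
Proof.
  intros HA HB HAB.
  assert (Hd : Fsig Ps (fun w => B w /\ ~ A w)).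
  { apply sa_I2; auto. apply Fsig_sigma. apply sa_c; auto. apply Fsig_sigma. }
  assert (E : Prob Ps B = Prob Ps A + Prob Ps (fun w => B w /\ ~ A w)).
  { rewrite <- P_add; auto. f_equal. apply set_ext; intro w. split.
    intro H. destruct (classic (A w)); tauto. intros [H|H]; auto; tauto. intros w H [_ H']; auto. }
  pose proof (Prob_nonneg Ps _ Hd). lra.
Qed.

Definition disj {T} (A : nat -> set T) (n : nat) : set T :=
  fun w => A n w /\ forall j, (j < n)%nat -> ~ A j w.

Lemma disj_meas {T} (S : set (set T)) (HS : is_sigma_algebra S) A :
  (forall n, S (A n)) -> forall n, S (disj A n).
Proof.
  intros HA n; unfold disj. apply sa_I2; auto.
  apply (sa_ext S (fun w => ~ exists j, (fun j w => (j < n)%nat /\ A j w) j w)).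
  - intro w; split. intros H j Hj HAj. apply H; eauto. intros H [j [Hj HAj]]. eapply H; eauto.
  - apply sa_c; auto. apply (sa_union _ HS). intro j.
    destruct (lt_dec j n).
    + apply (sa_ext S (A j)); auto. intro; tauto.
    + apply (sa_ext S (fun _ => False)). intro; tauto. apply sa_empty; auto.
Qed.

Lemma disj_least {T} (A : nat -> set T) w n : A n w -> exists m, disj A m w.
Proof.
  induction n as [n IH] using lt_wf_ind. intro H.
  destruct (classic (exists j, (j < n)%nat /\ A j w)) as [[j [Hj HAj]]|Hn].
  - eapply IH; eauto.
  - exists n. split; auto. intros j Hj HAj; apply Hn; eauto.
Qed.

Lemma disj_disjoint {T} (A : nat -> set T) : forall m n w, m <> n -> disj A m w -> disj A n w -> False.
Proof.
  intros m n w Hmn [H1 H2] [H3 H4].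
  destruct (Nat.lt_total m n) as [h|[h|h]]; [eapply H4; eauto|lia|eapply H2; eauto].
Qed.

Lemma sum_zero (a : nat -> R) : (forall n, a n = 0) -> forall n, sum_f_R0 a n = 0.
Proof. intros H n; induction n; simpl; [apply H| rewrite IHn, H; ring]. Qed.

Lemma null_union Ps (N : nat -> set (Omega Ps)) : (forall n, Fsig Ps (N n)) -> (forall n, Prob Ps (N n) = 0) ->
  Fsig Ps (fun w => exists n, N n w) /\ Prob Ps (fun w => exists n, N n w) = 0.
Proof.
  intros HF HP. split. apply (sa_union _ (Fsig_sigma Ps)); auto.
  assert (E : (fun w => exists n, N n w) = (fun w => exists n, disj N n w)).
  { apply set_ext; intro w; split; intros [n H].
    eapply disj_least; eauto. exists n; apply H. }
  rewrite E.
  pose proof (Prob_sigma_additive Ps (disj N) (disj_meas _ (Fsig_sigma Ps) N HF) (disj_disjoint N)) as H.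
  assert (H0 : forall n, Prob Ps (disj N n) = 0).
  { intro n. pose proof (P_mono Ps (disj N n) (N n) (disj_meas _ (Fsig_sigma Ps) N HF n) (HF n) (fun w h => proj1 h)).
    pose proof (Prob_nonneg Ps _ (disj_meas _ (Fsig_sigma Ps) N HF n)). rewrite HP in *. lra. }
  apply (uniqueness_sum _ _ _ H). intros eps He; exists 0%nat; intros n _.
  rewrite (sum_zero _ H0). unfold R_dist. replace (0-0) with 0 by ring. rewrite Rabs_R0; lra.
Qed.

Lemma holds_on_sub Ps R0 Y Y0 (A B : set (Omega Ps)) :
  holds_on Ps R0 Y Y0 A -> (forall w, B w -> A w) -> holds_on Ps R0 Y Y0 B.
Proof. intros [N [H1 [H2 H3]]] H. exists N; repeat split; auto. Qed.

Lemma calAv_union Ps G k F Y0 (HG : sub_sigma_algebra Ps G)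
  (Hpaste : forall (A : nat -> set (Omega Ps)) (Y : nat -> Omega Ps -> ereal),
     (forall i, calAv Ps G k F Y0 (A i)) ->
     (forall i j w, i <> j -> A i w -> A j w -> False) ->
     (forall i, F (Y i)) ->
     (forall i, holds_on Ps (rel_neg k) (Y i) Y0 (A i)) ->
     forall Z : Omega Ps -> ereal,
       (forall i w, A i w -> Z w = Y i w) ->
       (forall w, (forall i, ~ A i w) -> Z w = Fin 0) ->
       F Z)
  (A : nat -> set (Omega Ps)) :
  (forall n, calAv Ps G k F Y0 (A n)) -> calAv Ps G k F Y0 (fun w => exists n, A n w).
Proof.
  intros HA. destruct HG as [HGs HGF].
  assert (HY : forall n, {Y | F Y /\ holds_on Ps (rel_neg k) Y Y0 (A n)}).
  { intro n. apply constructive_indefinite_description. exact (proj2 (HA n)). }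
  pose (Y := fun n => proj1_sig (HY n)).
  assert (HFY : forall n, F (Y n)) by (intro n; exact (proj1 (proj2_sig (HY n)))).
  assert (HHY : forall n, holds_on Ps (rel_neg k) (Y n) Y0 (A n)) by (intro n; exact (proj2 (proj2_sig (HY n)))).
  pose (D := disj A).
  assert (HGD : forall n, G (D n)) by (apply disj_meas; auto; intro n; exact (proj1 (HA n))).
  assert (HDv : forall n, calAv Ps G k F Y0 (D n)).
  { intro n; split; auto. exists (Y n); split; auto. eapply holds_on_sub; eauto. intros w h; apply h. }
  pose (Z := fun w => match excluded_middle_informative (exists n, D n w) with
                      | left _ => Y (epsilon (inhabits 0%nat) (fun n => D n w)) w
                      | right _ => Fin 0 end).
  assert (HZ1 : forall i w, D i w -> Z w = Y i w).
  { intros i w Hi. unfold Z. destruct excluded_middle_informative as [e|ne]; [|exfalso; eauto].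
    pose proof (epsilon_spec (inhabits 0%nat) (fun n => D n w) (ex_intro _ i Hi)) as He. cbv beta in He.
    destruct (Nat.eq_dec (epsilon (inhabits 0%nat) (fun n => D n w)) i) as [e'|ne'].
    rewrite e'; reflexivity. exfalso; eapply disj_disjoint; eauto. }
  assert (HZ2 : forall w, (forall i, ~ D i w) -> Z w = Fin 0).
  { intros w H. unfold Z. destruct excluded_middle_informative as [[i Hi]|ne]; auto. exfalso; eapply H; eauto. }
  assert (FZ : F Z).
  { apply (Hpaste D Y HDv (disj_disjoint A) HFY); auto.
    intro i; eapply holds_on_sub; eauto. intros w h; apply h. }
  split. apply (sa_union _ HGs). intro n; exact (proj1 (HA n)).
  exists Z; split; auto.
  assert (HN : forall n, {N | Fsig Ps N /\ Prob Ps N = 0 /\ forall w, A n w -> ~ N w -> rel_neg k (Y n w) (Y0 w)}).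
  { intro n. apply constructive_indefinite_description. exact (HHY n). }
  pose (Nf := fun n => proj1_sig (HN n)).
  destruct (null_union Ps Nf) as [HF0 HP0].
  { intro n; exact (proj1 (proj2_sig (HN n))). }
  { intro n; exact (proj1 (proj2 (proj2_sig (HN n)))). }
  exists (fun w => exists n, Nf n w). split; auto. split; auto.
  intros w [n Hn] HnN. destruct (disj_least A w n Hn) as [m Hm].
  rewrite (HZ1 m w Hm).
  apply (proj2 (proj2 (proj2_sig (HN m)))). apply Hm. intro h; apply HnN; exists m; exact h.
Qed.

Theorem mainTheorem7 (Ps : ProbSpace) (G : set (set (Omega Ps)))
  (k : relation_kind) (F : set (Omega Ps -> ereal)) (Y0 : Omega Ps -> ereal) :
  sub_sigma_algebra Ps G ->
  (forall Y, F Y -> L0bar G Y) ->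
  L0bar G Y0 ->
  (exists Y, F Y) ->
  (* closure of F under countable pastings sum_i Y_i 1_{A_i} *)
  (forall (A : nat -> set (Omega Ps)) (Y : nat -> Omega Ps -> ereal),
     (forall i, calAv Ps G k F Y0 (A i)) ->
     (forall i j w, i <> j -> A i w -> A j w -> False) ->
     (forall i, F (Y i)) ->
     (forall i, holds_on Ps (rel_neg k) (Y i) Y0 (A i)) ->
     forall Z : Omega Ps -> ereal,
       (forall i w, A i w -> Z w = Y i w) ->
       (forall w, (forall i, ~ A i w) -> Z w = Fin 0) ->
       F Z) ->
  exists AM AMv : set (Omega Ps),
    calA Ps G k F Y0 AM /\ calAv Ps G k F Y0 AMv /\
    Prob Ps (setI AM AMv) = 0 /\ Prob Ps (setU AM AMv) = 1.
Proof.
  intros HG HFm HY0 [Y1 HY1] Hpaste.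
  pose proof HG as [HGs HGF].
  pose proof (Fsig_sigma Ps) as HFs.
  pose (E := fun x => exists A, calAv Ps G k F Y0 A /\ x = Prob Ps A).
  assert (Hempty : calAv Ps G k F Y0 (fun _ => False)).
  { split. apply sa_empty; auto. exists Y1; split; auto.
    exists (fun _ => False); split; [apply sa_empty; auto| split; [apply P_empty| intros w []]]. }
  assert (Hbound : bound E).
  { exists 1. intros x [A [HA ->]]. rewrite <- (Prob_full Ps). apply P_mono; auto.
    apply HGF, (proj1 HA). apply (sa_full _ HFs). }
  assert (Hne : exists x, E x) by (exists (Prob Ps (fun _ => False)), (fun _ => False); auto).
  destruct (completeness E Hbound Hne) as [s [Hub Hlub]].
  assert (HAn : forall n:nat, {A | calAv Ps G k F Y0 A /\ s - / INR (S n) < Prob Ps A}).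
  { intro n. apply constructive_indefinite_description.
    apply NNPP; intro Hn.
    assert (Hpos : 0 < / INR (S n)) by (apply Rinv_0_lt_compat, lt_0_INR; lia).
    assert (s <= s - / INR (S n)); [|lra].
    apply Hlub. intros x [A [HA ->]].
    apply Rnot_lt_le. intro h; apply Hn; eauto. }
  pose (An := fun n => proj1_sig (HAn n)).
  pose (U := fun w => exists n, An n w).
  assert (HU : calAv Ps G k F Y0 U).
  { apply calAv_union; auto. intro n; exact (proj1 (proj2_sig (HAn n))). }
  assert (HUF : Fsig Ps U) by (apply HGF, (proj1 HU)).
  assert (HUs : Prob Ps U = s).
  { apply Rle_antisym. apply Hub. exists U; auto.
    apply Rnot_lt_le. intro Hlt.
    destruct (archimed_cor1 (s - Prob Ps U)) as [N [HN1 HN2]]; [lra|].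
    pose proof (proj2 (proj2_sig (HAn (N - 1)%nat))) as h.
    assert (Prob Ps (An (N-1)%nat) <= Prob Ps U).
    { apply P_mono; auto. apply HGF, (proj1 (proj1 (proj2_sig (HAn (N-1)%nat)))).
      intros w hw; exists (N-1)%nat; exact hw. }
    unfold An in *. assert (HSN : / INR (S (N-1)) = / INR N) by (do 2 f_equal; lia). lra. }
  exists (fun w => ~ U w), U. split; [|split; [exact HU|split]].
  - split. apply sa_c; auto. apply (proj1 HU).
    intros Y HY.
    pose (B := fun w => ~ U w /\ rel_neg k (Y w) (Y0 w)).
    assert (HB : G B).
    { apply sa_I2; auto. apply sa_c; auto. apply (proj1 HU). apply meas_relneg; auto. }
    assert (HBF : Fsig Ps B) by auto.
    assert (HPB : Prob Ps B = 0).
    { destruct (Rle_lt_or_eq_dec _ _ (Prob_nonneg Ps B HBF)) as [hlt|heq]; [exfalso|auto].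
      assert (HBv : calAv Ps G k F Y0 B).
      { split; auto. exists Y; split; auto. exists (fun _ => False).
        split; [apply sa_empty; auto|split; [apply P_empty|]]. intros w hw _; apply hw. }
      pose proof (calAv_union Ps G k F Y0 HG Hpaste
                    (fun n => match n with 0%nat => U | _ => B end)) as HUB.
      assert (Eq : (fun w => exists n, (fun n => match n with 0%nat => U | _ => B end) n w)
                   = (fun w => U w \/ B w)).
      { apply set_ext; intro w; split. intros [[|n] h]; auto. intros [h|h]; [exists 0%nat|exists 1%nat]; auto. }
      specialize (HUB (fun n => match n with 0%nat => HU | _ => HBv end)). pose proof (eq_ind _ (calAv Ps G k F Y0) HUB _ Eq) as HUB2.
      assert (Prob Ps (fun w => U w \/ B w) <= s) by (apply Hub; eexists; eauto).
      rewrite P_add in H; [lra|auto|auto|]. intros w h1 [h2 _]; exact (h2 h1). }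
    exists B. split; auto. split; auto. intros w Hw HnB.
    apply NNPP; intro Hn. apply HnB; split; auto.
  - assert (Eq : setI (fun w => ~ U w) U = fun _ => False) by (apply set_ext; unfold setI; intro; tauto).
    rewrite Eq; apply P_empty.
  - assert (Eq : setU (fun w => ~ U w) U = fun _ => True).
    { apply set_ext; unfold setU; intro w; split; auto. intros _; destruct (classic (U w)); auto. }
    rewrite Eq; apply Prob_full.
Qed.
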